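(* Let $\psi\in\mathbb C^n$ with $\|\psi\|=1$, $\hbar>0$, $H$ an $n\times n$ Hermitian matrix and $\xi$ an $n\times n$ skew-Hermitian matrix. Then $$[\,i\hbar\xi-H,\ \psi\psi^\dagger\,]=0$$ holds if and only if there exists a skew-Hermitian matrix $\kappa$ such that $$\xi+i\hbar^{-1}H=\{\mathbf 1-2\psi\psi^\dagger,\kappa\}.$$ Moreover, in that case $\xi\psi=-i\hbar^{-1}H\psi-2(\psi^\dagger\kappa\psi)\psi$, where $-2i\hbar\,\psi^\dagger\kappa\psi$ is real; hence if $\psi(t)$ satisfies $\dot\psi=\xi\psi$ with such $\xi(t),\kappa(t)$, then $i\hbar\dot\psi=H\psi+\alpha\psi$ with the real function $\alpha(t)=-2i\hbar\,\psi^\dagger\kappa\psi$.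
   Context: $\{A,B\}=AB+BA$ denotes the anticommutator and $[A,B]=AB-BA$ the commutator; $\mathbf 1$ is the identity matrix. *)

(* Defs.v *)
(* Complex scalars: an arbitrary numClosedFieldType C
   (e.g. algC), which has 'i and conjugation Num.conj. *)
From HB Require Import structures.
From mathcomp Require Import all_boot all_order all_algebra.
Set Implicit Arguments. Unset Strict Implicit. Unset Printing Implicit Defensive.
Import Order.TTheory GRing.Theory Num.Theory.
Local Open Scope ring_scope.

Definition adjmx (C : numClosedFieldType) (m n : nat) (A : 'M[C]_(m, n)) : 'M[C]_(n, m) :=
  (map_mx Num.conj A)^T.

Definition is_hermitian (C : numClosedFieldType) (n : nat) (A : 'M[C]_n) : Prop :=
  adjmx A = A.

Definition is_skew_hermitian (C : numClosedFieldType) (n : nat) (A : 'M[C]_n) : Prop :=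
  adjmx A = - A.

Definition commmx (C : numClosedFieldType) (n : nat) (A B : 'M[C]_n) : 'M[C]_n :=
  A *m B - B *m A.
Definition acommmx (C : numClosedFieldType) (n : nat) (A B : 'M[C]_n) : 'M[C]_n :=
  A *m B + B *m A.

Definition cdot (C : numClosedFieldType) (n : nat) (u v : 'cV[C]_n) : C :=
  (adjmx u *m v) ord0 ord0.

(* Main.v *)
Require Import Defs.
From HB Require Import structures.
From mathcomp Require Import all_boot all_order all_algebra.
From mathcomp Require Import ring.
Import Order.TTheory GRing.Theory Num.Theory.
Local Open Scope ring_scope.

Section Adj.
Variable C : numClosedFieldType.

Lemma adjmxM m n p (A : 'M[C]_(m, n)) (B : 'M[C]_(n, p)) :
  adjmx (A *m B) = adjmx B *m adjmx A.
Proof. by rewrite /adjmx map_mxM trmx_mul. Qed.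

Lemma adjmxD m n (A B : 'M[C]_(m, n)) : adjmx (A + B) = adjmx A + adjmx B.
Proof. by rewrite /adjmx map_mxD linearD. Qed.

Lemma adjmxN m n (A : 'M[C]_(m, n)) : adjmx (- A) = - adjmx A.
Proof. by rewrite /adjmx map_mxN linearN. Qed.

Lemma adjmxB m n (A B : 'M[C]_(m, n)) : adjmx (A - B) = adjmx A - adjmx B.
Proof. by rewrite adjmxD adjmxN. Qed.

Lemma adjmxZ m n a (A : 'M[C]_(m, n)) : adjmx (a *: A) = a^* *: adjmx A.
Proof. by rewrite /adjmx map_mxZ linearZ. Qed.

Lemma adjmx1 n : adjmx (1%:M : 'M[C]_n) = 1%:M.
Proof. by rewrite /adjmx map_mx1 trmx1. Qed.

Lemma adjmxK m n (A : 'M[C]_(m, n)) : adjmx (adjmx A) = A.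
Proof. by apply/matrixP=> i j; rewrite /adjmx !mxE conjCK. Qed.

Lemma conj_cdot n (u v : 'cV[C]_n) : (cdot u v)^* = cdot v u.
Proof.
rewrite /cdot /adjmx !mxE rmorph_sum; apply: eq_bigr => i _.
by rewrite !mxE rmorphM /= conjCK mulrC.
Qed.

Lemma adj_cdot n (u v : 'cV[C]_n) : adjmx u *m v = (cdot u v)%:M.
Proof. exact: mx11_scalar. Qed.

End Adj.

Theorem mainTheorem3 (C : numClosedFieldType) (n : nat)
    (psi : 'cV[C]_n) (hbar : C) (H xi : 'M[C]_n)
    (hpsi : cdot psi psi = 1) (hhbar : 0 < hbar)
    (hH : is_hermitian H) (hxi : is_skew_hermitian xi) :
  let P := mulmx psi (adjmx psi) in
  (commmx ('i * hbar *: xi - H) P = 0 <->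
     exists kappa : 'M[C]_n, is_skew_hermitian kappa /\
       xi + ('i / hbar) *: H = acommmx (1%:M - 2 *: P) kappa)
  /\
  (forall kappa : 'M[C]_n, is_skew_hermitian kappa ->
     xi + ('i / hbar) *: H = acommmx (1%:M - 2 *: P) kappa ->
     let alpha := - 2 * 'i * hbar * cdot psi (kappa *m psi) in
     xi *m psi = - ('i / hbar) *: (H *m psi) - (2 * cdot psi (kappa *m psi)) *: psi
     /\ alpha \is Num.real
     /\ (forall dpsi : 'cV[C]_n, dpsi = xi *m psi ->
           'i * hbar *: dpsi = H *m psi + alpha *: psi)).
Proof.
move=> P.
have hh0 : hbar != 0 by rewrite gt_eqF.
have h2 : (2 : C) != 0 by rewrite pnatr_eq0.
have hhr : hbar^* = hbar by apply: conj_Creal; apply: gtr0_real.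
have hPP : P *m P = P.
  by rewrite /P mulmxA -(mulmxA psi) adj_cdot hpsi mulmx1.
have hPa : adjmx P = P by rewrite /P adjmxM adjmxK.
set Q := 1%:M - 2 *: P.
have hQa : adjmx Q = Q.
  by rewrite /Q adjmxB adjmx1 adjmxZ hPa rmorph_nat.
have hQQ : Q *m Q = 1%:M.
  rewrite /Q mulmxBl mul1mx mulmxBr mulmx1 -scalemxAl -scalemxAr scalerA hPP.
  have -> : (2 * 2 : C) = 2 + 2 by ring.
  by rewrite [(2 + 2) *: _]scalerDl opprB addrK subrK.
set M := xi + ('i / hbar) *: H.
have hMa : adjmx M = - M.
  rewrite /M adjmxD adjmxZ hxi hH rmorphM /= conjCi fmorphV /= hhr.
  by rewrite opprD mulNr scaleNr.
have hA : 'i * hbar *: xi - H = ('i * hbar) *: M.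
  rewrite /M scalerDr scalerA mulrACA -expr2 sqrCi mulfV // mulr1 scaleN1r.
  by [].
have hQM : Q *m M = M *m Q <-> P *m M = M *m P.
  rewrite /Q mulmxBl mul1mx mulmxBr mulmx1 -scalemxAl -scalemxAr.
  split => [e | ->] //.
  by move: e => /addrI /oppr_inj /(scalerI h2).
split.
  split.
  - move=> hc.
    have hPM : P *m M = M *m P.
      move: hc; rewrite /commmx hA -scalemxAl -scalemxAr -scalerBr => /eqP.
      rewrite scaler_eq0 mulf_eq0 (negbTE (@neq0Ci C)) (negbTE hh0) /= subr_eq0.
      by move=> /eqP ->.
    exists (2^-1 *: (Q *m M)); split.
    + rewrite /is_skew_hermitian adjmxZ adjmxM hMa hQa mulNmx fmorphV rmorph_nat.
      by rewrite (proj2 hQM hPM) scalerN.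
    + rewrite /acommmx -/Q -scalemxAr -scalemxAl mulmxA hQQ mul1mx.
      rewrite (proj2 hQM hPM) -mulmxA hQQ mulmx1.
      rewrite -scalerDl.
      have -> : (2^-1 + 2^-1 : C) = 1 by field.
      by rewrite scale1r.
  - move=> [k [hk e]].
    have hPM : P *m M = M *m P.
      apply/hQM; rewrite e /acommmx -/Q.
      rewrite mulmxDr mulmxDl !mulmxA hQQ mul1mx -!mulmxA hQQ mulmx1 addrC.
      by [].
    by rewrite /commmx hA -scalemxAl -scalemxAr -scalerBr hPM subrr scaler0.
move=> k hk e alpha.
have hQpsi : Q *m psi = - psi.
  rewrite /Q mulmxBl mul1mx -scalemxAl /P -mulmxA adj_cdot hpsi mulmx1.
  rewrite -{1}[psi]scale1r -scalerBl.
  have -> : (1 - 2 : C) = -1 by ring.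
  by rewrite scaleN1r.
set c := cdot psi (k *m psi).
have hMpsi : M *m psi = - (2 * c) *: psi.
  rewrite e /acommmx -/Q mulmxDl -!mulmxA hQpsi mulmxN mulmxBl mul1mx.
  rewrite -scalemxAl /P -mulmxA adj_cdot -/c mul_mx_scalar.
  by rewrite scalerA addrC addKr scaleNr.
have hxipsi : xi *m psi = - ('i / hbar) *: (H *m psi) - (2 * c) *: psi.
  move: hMpsi; rewrite /M mulmxDl -scalemxAl => /(canRL (addrK _)) ->.
  by rewrite scaleNr addrC scaleNr.
split; first exact: hxipsi.
split.
  have hc : c^* = - c.
    rewrite /c conj_cdot /cdot adjmxM hk mulmxN mulNmx -mulmxA mxE.
    by [].
  rewrite CrealE /alpha; apply/eqP.
  rewrite !rmorphM /= rmorphN /= rmorph_nat conjCi hhr hc.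
  by rewrite -/c !(mulrN, mulNr) !opprK.
move=> dpsi ->.
rewrite hxipsi scalerBr !scalerA /alpha.
have e1 : 'i * hbar * - ('i / hbar) = 1.
  by rewrite mulrN mulrACA -expr2 sqrCi mulfV // mulr1 opprK.
rewrite e1 scale1r -scaleNr; congr (_ + _ *: _); rewrite -/c; clearbody c; ring.
Qed.
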